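(* Let $p>3$ be prime, $t\in\{1,3,p,3p\}$, and $1\le r\le 3p-1$ with $\gcd(r,3p)=1$. Then $\mathcal{S}(p,r,t)=p$ if $r\equiv 2\pmod 3$ and $|r|_p$ is odd, and $\mathcal{S}(p,r,t)=0$ otherwise.
   Context: $|r|_m$ is the multiplicative order of $r$ modulo $m$ (with $|r|_1=1$). $S_k(x):=1+x+\cdots+x^{k-1}$, $S_0:=0$. For $m\ge1$ with $\gcd(r,m)=1$, $\kappa(m,r,t):=\dfrac{m|r|_m}{\gcd(m,\,tS_{|r|_m}(r))}$. For $d\in\{1,3,p,3p\}$, $\Lambda(d,r,t):=\{\ell>0:\ \ell \text{ divides } \frac{|r|_{3p}}{\gcd(\kappa(d,r,t),|r|_{3p})}\text{ and }\gcd(r^{\ell\kappa(d,r,t)}-1,3p)=d\}$, and $\mathcal{S}(d,r,t):=\sum_{\ell\in\Lambda(d,r,t)} d\,\phi\!\left(\frac{|r|_{3p}}{\ell\gcd(\kappa(d,r,t),|r|_{3p})}\right)$, with $\phi$ Euler's function. *)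

(* Defs.v *)
From mathcomp Require Import all_boot.
Set Implicit Arguments. Unset Strict Implicit. Unset Printing Implicit Defensive.

(* |r|_m : multiplicative order of r modulo m, i.e. the least k > 0 with
   r^k = 1 (mod m).  For m = 1 this gives 1 (r^1 = 1 mod 1).  The search
   range k <= m suffices when gcd(r,m) = 1 (the only case used). *)
Definition mord (m r : nat) : nat :=
  (find (fun k => r ^ k.+1 == 1 %[mod m]) (iota 0 m)).+1.

Definition Ssum (k x : nat) : nat := \sum_(i < k) x ^ i.

Definition kappa (m r t : nat) : nat :=
  (m * mord m r) %/ gcdn m (t * Ssum (mord m r) r).

Definition Nbound (p d r t : nat) : nat :=
  mord (3 * p) r %/ gcdn (kappa d r t) (mord (3 * p) r).

Definition inLambda (p d r t l : nat) : bool :=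
  [&& 0 < l, l %| Nbound p d r t &
      gcdn (r ^ (l * kappa d r t) - 1) (3 * p) == d].

(* S(d,r,t) = sum_{l in Lambda(d,r,t)} d * phi(|r|_{3p} / (l gcd(kappa,|r|_{3p}))).
   Lambda is contained in {1,...,N}, so we sum over l < N+1. *)
Definition Ssum_Lambda (p d r t : nat) : nat :=
  \sum_(l < (Nbound p d r t).+1 | inLambda p d r t l)
     d * totient (mord (3 * p) r %/ (l * gcdn (kappa d r t) (mord (3 * p) r))).

(* Main.v *)
Require Import Defs.
From mathcomp Require Import all_boot zify.

Lemma mord_spec m r k0 : 0 < k0 <= m -> r ^ k0 == 1 %[mod m] ->
  [/\ r ^ mord m r == 1 %[mod m], mord m r <= k0 &
      forall k, 0 < k < mord m r -> ~~ (r ^ k == 1 %[mod m])].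
Proof.
move=> /andP[k0p k0m] Pk0.
have hk : k0.-1 < m by lia.
have hin : has (fun k => r ^ k.+1 == 1 %[mod m]) (iota 0 m).
  apply/hasP; exists k0.-1; first by rewrite mem_iota add0n hk.
  by rewrite prednK.
have hlt := hin; rewrite has_find size_iota in hlt.
have bf k : k < find (fun k => r ^ k.+1 == 1 %[mod m]) (iota 0 m) ->
    (r ^ k.+1 == 1 %[mod m]) = false.
  move=> hk'; have := @before_find _ 0 (fun k => r ^ k.+1 == 1 %[mod m]) (iota 0 m) k hk'.
  by rewrite nth_iota ?add0n //; lia.
rewrite /mord; split.
- by have := nth_find 0 hin; rewrite nth_iota // add0n.
- rewrite ltnNge; apply/negP => H.
  by have := bf k0.-1 ltac:(lia); rewrite prednK // Pk0.
- move=> k /andP[kp kl].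
  by have := bf k.-1 ltac:(lia); rewrite prednK // => ->.
Qed.

Lemma fermat1 p r : prime p -> coprime r p -> r ^ p.-1 == 1 %[mod p].
Proof.
move=> pp co; have p0 := prime_gt0 pp.
have r0 : 0 < r.
  case: r co => // /eqP; rewrite gcd0n => E; by move: pp; rewrite E.
have := fermat_little r pp; rewrite -{1}(prednK p0) expnS => /eqP.
rewrite eqn_mod_dvd; last by rewrite -{1}(muln1 r) leq_mul // expn_gt0 r0.
 rewrite -[X in _ - X](muln1 r) -mulnBr Gauss_dvdr.
  by rewrite -eqn_mod_dvd // expn_gt0 r0.
by rewrite coprime_sym.
Qed.

Lemma ord_dvd m r o k : 0 < o -> r ^ o == 1 %[mod m] ->
  (forall j, 0 < j < o -> ~~ (r ^ j == 1 %[mod m])) ->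
  r ^ k == 1 %[mod m] -> o %| k.
Proof.
move=> o0 Ho Hmin; rewrite {1}(divn_eq k o) expnD (mulnC (k %/ o)) expnM.
have E : (r ^ o) ^ (k %/ o) %% m = 1 %% m by rewrite -modnXm (eqP Ho) modnXm exp1n.
move=> Hk; have Hs : r ^ (k %% o) == 1 %[mod m].
  by rewrite -(eqP Hk) -modnMml E modnMml mul1n.
rewrite /dvdn; apply/negPn/negP => s0.
have := Hmin (k %% o); rewrite Hs ltn_pmod // andbT lt0n s0 => /(_ isT); done.
Qed.

Lemma pow_dvd m r o k : r ^ o == 1 %[mod m] -> o %| k -> r ^ k == 1 %[mod m].
Proof.
move=> Ho /dvdnP[q ->]; rewrite mulnC expnM.
by rewrite -modnXm (eqP Ho) modnXm exp1n.
Qed.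

Lemma r3_2 r e : r %% 3 = 2 -> r ^ e %% 3 = if odd e then 2 else 1.
Proof.
move=> H; rewrite -modnXm H; elim: e => [|e IH] //.
by rewrite expnS -modnMmr IH /=; case: (odd e).
Qed.

Lemma r3_1 r e : r %% 3 = 1 -> r ^ e %% 3 = 1.
Proof. by move=> H; rewrite -modnXm H exp1n. Qed.

Lemma gcdA p x : prime p -> 3 < p -> 3 %| x -> gcdn x (3 * p) != p.
Proof.
move=> pp p3 h3; apply/negP => /eqP E.
have : 3 %| gcdn x (3 * p) by rewrite dvdn_gcd h3 dvdn_mulr.
rewrite E dvdn_prime2 // => /eqP; lia.
Qed.

Lemma gcdB p x : prime p -> p %| x -> ~~ (3 %| x) -> gcdn x (3 * p) = p.
Proof.
move=> pp hp h3; rewrite Gauss_gcdr; first exact/gcdn_idPr.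
by rewrite coprime_sym prime_coprime.
Qed.

Theorem lemma5p7 (p t r : nat) :
  prime p -> 3 < p ->
  t \in [:: 1; 3; p; 3 * p] ->
  1 <= r <= 3 * p - 1 -> coprime r (3 * p) ->
  Ssum_Lambda p p r t =
    (if (r %% 3 == 2) && odd (mord p r) then p else 0).
Proof.
move=> pp p3 _ /andP[r1 _] co.
have p0 := prime_gt0 pp.
have co3 : coprime r 3 by move: co; rewrite coprimeMr => /andP[].
have cop : coprime r p by move: co; rewrite coprimeMr => /andP[].
have c3p : coprime 3 p by rewrite prime_coprime // dvdn_prime2 //; apply/eqP; lia.
have oddp : odd p.
  by rewrite -coprimen2 coprime_sym prime_coprime // dvdn_prime2 //; apply/eqP; lia.
have r3 : (r %% 3 == 1) || (r %% 3 == 2).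
  have : ~~ (3 %| r) by rewrite -prime_coprime // coprime_sym.
  rewrite /dvdn; have := ltn_pmod r (isT : 0 < 3); lia.
set o := mord p r.
have [Ho ole Omin] : [/\ r ^ o == 1 %[mod p], o <= p.-1 &
      forall k, 0 < k < o -> ~~ (r ^ k == 1 %[mod p])].
  by apply: mord_spec; [lia | exact: fermat1].
have o0 : 0 < o by [].
have [e he hK] : exists2 e, (e == 1) || (e == p) & kappa p r t = o * e.
  rewrite /kappa -/o.
  have : gcdn p (t * Ssum o r) %| p by exact: dvdn_gcdl.
  case/primeP: pp => _ /[apply] /pred2P [->|->].
    by exists p; rewrite ?eqxx ?orbT // divn1 mulnC.
  by exists 1; rewrite // muln1 mulKn.
have oddeq : odd (o * e) = odd o.
  by rewrite oddM; case/orP: he => /eqP ->; rewrite ?oddp /= ?andbT.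
have powp l : r ^ (l * kappa p r t) == 1 %[mod p].
  apply: (@pow_dvd p r o _ Ho). by rewrite hK mulnCA dvdn_mulr.
have rpos k : 1 <= r ^ k by rewrite expn_gt0; lia.
case: ifP => [/andP[/eqP H2 oo] | Hn].
-
  have P2o : r ^ (2 * o) == 1 %[mod 3 * p].
    rewrite chinese_remainder //; apply/andP; split.
      by rewrite r3_2 // oddM.
    by apply: (@pow_dvd p r o _ Ho); rewrite dvdn_mull.
  have hk0 : 0 < 2 * o <= 3 * p.
    apply/andP; split; first by rewrite muln_gt0.
    rewrite leq_mul //; apply: leq_trans ole _; exact: leq_pred.
  have [HO OO _] := @mord_spec (3 * p) r (2 * o) hk0 P2o.
  have hO : mord (3 * p) r = 2 * o.
    move: HO; rewrite chinese_remainder // => /andP[HO3 HOp].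
    have d2 : 2 %| mord (3 * p) r.
      by move: HO3; rewrite r3_2 // dvdn2; case: odd.
    have dp : o %| mord (3 * p) r by apply: ord_dvd Omin HOp.
    have : 2 * o %| mord (3 * p) r by rewrite Gauss_dvd ?coprime2n ?oo ?d2.
    move/(dvdn_leq (isT : 0 < mord (3 * p) r)) => HH; apply/eqP; by rewrite eqn_leq HH OO.
  have hG : gcdn (kappa p r t) (mord (3 * p) r) = o.
    rewrite hK hO [2 * o]mulnC -muln_gcdr.
    have : coprime e 2 by rewrite coprimen2; case/orP: he => /eqP ->.
    by rewrite /coprime => /eqP ->; rewrite muln1.
  have hN : Nbound p p r t = 2 by rewrite /Nbound hG hO mulnK.
  rewrite /Ssum_Lambda /inLambda hN hG hO.
  rewrite /Ssum_Lambda /inLambda ?hN ?hG ?hO hK.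
  have g1 : gcdn (r ^ (1 * (o * e)) - 1) (3 * p) = p.
    apply: gcdB => //.
      by rewrite -eqn_mod_dvd //; have := powp 1; rewrite hK.
    by rewrite -eqn_mod_dvd // r3_2 // mul1n oddeq oo.
  have g2 : gcdn (r ^ (2 * (o * e)) - 1) (3 * p) != p.
    by apply: gcdA => //; rewrite -eqn_mod_dvd // r3_2 // oddM.
  rewrite (bigD1 (Ordinal (isT : 1 < 3))); last by rewrite /= g1 eqxx.
  rewrite big1 ?addn0.
    by rewrite /= mul1n mulnK // totient_prime // muln1 addn0.
  move=> [[|[|[|k]]] lt3] //.
    by rewrite -val_eqE /= andbF.
  by move=> /andP[/and3P[_ _ /=]]; rewrite (negbTE g2).
- rewrite /Ssum_Lambda big1 // => l; rewrite /inLambda => /and3P[_ _ H]; exfalso.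
  move: H; apply/negP; apply: gcdA => //.
  rewrite -eqn_mod_dvd //.
  case/orP: r3 => /eqP h; first by rewrite r3_1.
  rewrite r3_2 // hK oddM oddeq.
  by move: Hn; rewrite h eqxx /= => ->; rewrite andbF.
Qed.
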